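(* Let $G$ be a connected graph of order $n\geq 2$ and let $g:V(G_1)\to V(G_2)$ be any function, where $G_1,G_2$ are disjoint copies of $G$. Then $$1\leq Dist(F_{G})\leq Dist(G)+1.$$ Moreover, both bounds are sharp: there exist a connected graph $G$ of order at least $2$ and a function $g$ with $Dist(F_G)=1$, and there exist a connected graph $G$ of order at least $2$ and a function $g$ with $Dist(F_G)=Dist(G)+1$.
   Context: All graphs are finite, simple and undirected. A labeling $f:V(H)\to\{1,\dots,t\}$ of a graph $H$ is $t$-distinguishing if the only automorphism of $H$ preserving all vertex labels is the identity. The distinguishing number $Dist(H)$ is the least $t$ such that $H$ has a $t$-distinguishing labeling. Functigraph: let $G_1,G_2$ be disjoint copies of a connected graph $G$ and $g:V(G_1)\to V(G_2)$ a function. The functigraph $F_G$ (which depends on $g$) has vertex set $V(G_1)\cup V(G_2)$ and edge set $E(G_1)\cup E(G_2)\cup\{uv: u\in V(G_1),\ g(u)=v\}$. *)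

(* Defs.v *)
From mathcomp Require Import all_boot all_fingroup.
Set Implicit Arguments. Unset Strict Implicit. Unset Printing Implicit Defensive.

Definition simple_graph (T : finType) (e : rel T) : Prop :=
  symmetric e /\ irreflexive e.

Definition connected_graph (T : finType) (e : rel T) : Prop :=
  forall x y : T, connect e x y.

Definition is_aut (T : finType) (e : rel T) (s : {perm T}) : bool :=
  [forall x, forall y, e (s x) (s y) == e x y].

(* f : V -> {0,...,t-1} (labels {1..t} shifted by one) is t-distinguishing *)
Definition distinguishing (T : finType) (e : rel T) (t : nat)
  (f : {ffun T -> 'I_t}) : bool :=
  [forall s : {perm T}, (is_aut e s && [forall x, f (s x) == f x]) ==> (s == 1%g)].

Definition has_dist_labeling (T : finType) (e : rel T) (t : nat) : bool :=
  [exists f : {ffun T -> 'I_t}, distinguishing e f].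

Lemma has_dist_labeling_exists (T : finType) (e : rel T) :
  exists t, has_dist_labeling e t.
Proof.
exists #|T|; apply/existsP; exists [ffun x => enum_rank x].
apply/forallP => s; apply/implyP => /andP [_ /forallP H].
apply/eqP/permP => x; rewrite perm1.
by have /eqP := H x; rewrite !ffunE => /enum_rank_inj.
Qed.

Definition Dist (T : finType) (e : rel T) : nat :=
  ex_minn (has_dist_labeling_exists e).

(* functigraph: vertices inl u (copy G1) and inr v (copy G2) *)
Definition functigraph (T : finType) (e : rel T) (g : T -> T) : rel (T + T) :=
  fun a b =>
    match a, b with
    | inl u, inl v => e u v
    | inr u, inr v => e u v
    | inl u, inr v => g u == v
    | inr v, inl u => g u == v
    end.

(* Main.v *)
Require Import Defs.
From mathcomp Require Import all_boot all_fingroup.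
Set Implicit Arguments. Unset Strict Implicit. Unset Printing Implicit Defensive.

Lemma Dist_le (T : finType) (e : rel T) t : has_dist_labeling e t -> Dist e <= t.
Proof. rewrite /Dist; case: ex_minnP => m _ H; exact: H. Qed.

Lemma Dist_has (T : finType) (e : rel T) : has_dist_labeling e (Dist e).
Proof. rewrite /Dist; by case: ex_minnP. Qed.

Lemma has0 (T : finType) (e : rel T) (x : T) : ~~ has_dist_labeling e 0.
Proof. apply/negP => /existsP [f _]; by case: (f x). Qed.

Lemma Dist_gt0 (T : finType) (e : rel T) (x : T) : 0 < Dist e.
Proof.
case H: (Dist e) => [|//]. have := Dist_has e. by rewrite H (negbTE (has0 e x)).
Qed.

Section Main.
Variables (T : finType) (e : rel T) (g : T -> T).
Hypothesis esym : symmetric e.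
Hypothesis econn : connected_graph e.
Variable x0 : T.
Variables (t : nat) (f : {ffun T -> 'I_t}).
Hypothesis Hf : distinguishing e f.

Definition inI v := [exists u, g u == v].
Definition wd (i : 'I_t) : 'I_t.+1 := widen_ord (leqnSn t) i.
Definition lab (x : T + T) : 'I_t.+1 :=
  match x with inl u => wd (f u) | inr v => if inI v then ord_max else wd (f v) end.

Lemma wd_inj : injective wd.
Proof. move=> i j /(congr1 val) /= H; exact: val_inj. Qed.

Lemma lab_dist : distinguishing (functigraph e g) [ffun x => lab x].
Proof.
apply/forallP => s; apply/implyP => /andP [/forallP Haut /forallP Hlab].
have HF x y : functigraph e g (s x) (s y) = functigraph e g x y.
  by have /forallP /(_ y) /eqP := Haut x.
have HL x : lab (s x) = lab x by have /eqP := Hlab x; rewrite !ffunE.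
have notI u w : s (inl u) = inr w -> ~~ inI w.
  move=> E; apply/negP => Iw; have := HL (inl u); rewrite E /= Iw.
  move/(congr1 val) => /= Ht; have := ltn_ord (f u); by rewrite -Ht ltnn.
have step1 u : exists w, s (inl u) = inl w.
  case E0: (s (inl u)) => [w|w0]; first by exists w.
  exfalso.
  pose a := [pred x | [exists w, (s (inl x) == inr w) && ~~ inI w]].
  have cl1 x y : e x y -> a x -> a y.
    move=> exy /existsP [w /andP [/eqP Ex nIw]].
    have := HF (inl x) (inl y); rewrite Ex /= exy.
    case Ey: (s (inl y)) => [c|c] /=.
      move=> /eqP gc; by move: nIw; rewrite /inI; case/existsP; exists c; rewrite gc.
    move=> _; apply/existsP; exists c; rewrite eqxx /=; exact: (notI y c Ey).
  have cl : closed e a.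
    move=> x y exy; apply/idP/idP; first exact: cl1.
    by apply: cl1; rewrite esym.
  have Aall x : a x.
    have := closed_connect cl (econn u x); rewrite !inE => <-.
    apply/existsP; exists w0; rewrite E0 eqxx /=; exact: (notI u w0 E0).
  pose h x := match s (inl x) with inl w => w | inr w => w end.
  have hE x : s (inl x) = inr (h x) /\ ~~ inI (h x).
    have /existsP [w /andP [/eqP Ex nIw]] := Aall x; by rewrite /h Ex.
  have hinj : injective h.
    move=> x y Hxy; have [Ex _] := hE x; have [Ey _] := hE y.
    have : s (inl x) = s (inl y) by rewrite Ex Ey Hxy.
    by move/perm_inj => [].
  have /codomP [x Hx] := injF_onto hinj (g u).
  have [_ nI] := hE x; move: nI; rewrite -Hx /inI.
  by case/existsP; exists u.
pose s1 u := match s (inl u) with inl w => w | inr _ => u end.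
have s1E u : s (inl u) = inl (s1 u).
  by have [w Ew] := step1 u; rewrite /s1 Ew.
have s1inj : injective s1.
  move=> x y Hxy; have : s (inl x) = s (inl y) by rewrite !s1E Hxy.
  by move/perm_inj => [].
have p1id : perm s1inj == 1%g.
  move/forallP: Hf => /(_ (perm s1inj)) /implyP; apply; apply/andP; split.
    apply/forallP => x; apply/forallP => y; rewrite !permE.
    by have := HF (inl x) (inl y); rewrite !s1E /= => ->.
  apply/forallP => x; rewrite permE; have := HL (inl x); rewrite s1E /=.
  by move/wd_inj => ->.
have s1id u : s (inl u) = inl u.
  by rewrite s1E; move/eqP/permP: p1id => /(_ u); rewrite permE perm1 => ->.
have step3 v : exists w, s (inr v) = inr w.
  case E: (s (inr v)) => [w|w]; last by exists w.
  by have := s1id w; rewrite -{2}E => /perm_inj H; discriminate H.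
pose s2 v := match s (inr v) with inr w => w | inl _ => v end.
have s2E v : s (inr v) = inr (s2 v).
  by have [w Ew] := step3 v; rewrite /s2 Ew.
have s2inj : injective s2.
  move=> x y Hxy; have : s (inr x) = s (inr y) by rewrite !s2E Hxy.
  by move/perm_inj => [].
have s2I v : inI v -> s2 v = v.
  case/existsP => u /eqP <-.
  have := HF (inl u) (inr (g u)); rewrite s1id s2E /= eqxx.
  by move/eqP.
have p2id : perm s2inj == 1%g.
  move/forallP: Hf => /(_ (perm s2inj)) /implyP; apply; apply/andP; split.
    apply/forallP => x; apply/forallP => y; rewrite !permE.
    by have := HF (inr x) (inr y); rewrite !s2E /= => ->.
  apply/forallP => v; rewrite permE.
  case Iv: (inI v); first by rewrite s2I.
  have := HL (inr v); rewrite s2E /= Iv.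
  case I2: (inI (s2 v)).
    move/(congr1 val) => /= Ht; have := ltn_ord (f v); by rewrite -Ht ltnn.
  by move/wd_inj => ->.
have s2id v : s (inr v) = inr v.
  by rewrite s2E; move/eqP/permP: p2id => /(_ v); rewrite permE perm1 => ->.
apply/eqP/permP => [[u|v]]; by rewrite perm1 ?s1id ?s2id.
Qed.

Lemma functigraph_has : has_dist_labeling (functigraph e g) t.+1.
Proof. apply/existsP; exists [ffun x => lab x]; exact: lab_dist. Qed.
End Main.

Lemma part1 (T : finType) (e : rel T) (g : T -> T) :
      simple_graph e -> connected_graph e -> 2 <= #|T| ->
      1 <= Dist (functigraph e g) <= Dist e + 1.
Proof.
move=> [esym _] econn HT.
have [x0 _] : exists x : T, x \in T by apply/card_gt0P; exact: ltnW.
rewrite (Dist_gt0 _ (inl x0)) /= addn1.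
apply: Dist_le; have /existsP [f Hf] := Dist_has e; exact: (functigraph_has g esym econn Hf).
Qed.

Definition eP (x y : option bool) : bool :=
  match x, y with
  | None, Some false | Some false, None | Some false, Some true
  | Some true, Some false => true
  | _, _ => false end.
Definition gP (x : option bool) : option bool :=
  match x with None => None | Some false => None | Some true => Some false end.

Ltac check HF :=
  solve [ match goal with
  | E : ?s ?x = ?a, E' : ?s ?y = ?b |- _ =>
      let H := fresh in have H := HF x y; rewrite E E' /= in H; discriminate H
  | E : ?s ?x = ?a, E' : ?s ?y = ?a |- _ =>
      let H := fresh in have H := perm_inj (etrans E (esym E')); discriminate H
  end ].

Lemma asym (s : {perm (option bool + option bool)}) :
  is_aut (functigraph eP gP) s -> s = 1%g.
Proof.
move/forallP => Haut.
have HF x y : functigraph eP gP (s x) (s y) = functigraph eP gP x y.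
  by have /forallP /(_ y) /eqP := Haut x.
case E1 : (s (inr (Some true))) => [[[]|]|[[]|]]; try check HF.
all: case E2 : (s (inr (Some false))) => [[[]|]|[[]|]]; try check HF.
all: case E3 : (s (inl (Some true))) => [[[]|]|[[]|]]; try check HF.
all: case E4 : (s (inr None)) => [[[]|]|[[]|]]; try check HF.
all: case E5 : (s (inl (Some false))) => [[[]|]|[[]|]]; try check HF.
all: case E6 : (s (inl None)) => [[[]|]|[[]|]]; try check HF.
all: apply/permP => x; rewrite perm1; case: x => [[[]|]|[[]|]] //.
Qed.

From mathcomp Require Import zify.

Lemma kill (T : finType) (e : rel T) t (f : {ffun T -> 'I_t}) (h : T -> T)
  (hK : involutive h) x0 :
  [forall x, forall y, e (h x) (h y) == e x y] -> h x0 != x0 ->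
  (forall x, f (h x) = f x) -> ~~ distinguishing e f.
Proof.
move=> Ha Hx Hl; apply/negP => /forallP /(_ (perm (inv_inj hK))) /implyP H.
have : perm (inv_inj hK) == 1%g.
  apply: H; apply/andP; split.
    apply/forallP => x; apply/forallP => y; rewrite !permE.
    by move/forallP: Ha => /(_ x) /forallP /(_ y).
  by apply/forallP => x; rewrite permE Hl.
move/eqP/permP/(_ x0); rewrite permE perm1 => E; by rewrite E eqxx in Hx.
Qed.

Lemma two_vals (i j k : 'I_2) : i != j -> k != j -> i = k.
Proof.
by case: i => [[|[|//]] ?]; case: j => [[|[|//]] ?]; case: k => [[|[|//]] ?] => //=;
  move=> *; apply: val_inj.
Qed.

Definition eK2 (x y : bool) : bool := x != y.

Lemma noC4 : ~~ has_dist_labeling (functigraph eK2 id) 2.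
Proof.
apply/negP => /existsP [f Hf]; move: Hf; apply/negP.
set a := (inl false : bool + bool); set b := (inl true : bool + bool).
set c := (inr true : bool + bool); set d := (inr false : bool + bool).
have aut_tac : True by [].
case: (eqVneq (f b) (f d)) => Hbd.
  pose h (x : bool + bool) := match x with inl true => inr false | inr false => inl true | _ => x end.
  have hK : involutive h by case=> [[]|[]].
  apply: (@kill _ _ _ _ h hK b).
  - by apply/forallP => [[[]|[]]]; apply/forallP => [[[]|[]]].
  - by [].
  - by case=> [[]|[]].
case: (eqVneq (f a) (f c)) => Hac.
  pose h (x : bool + bool) := match x with inl false => inr true | inr true => inl false | _ => x end.
  have hK : involutive h by case=> [[]|[]].
  apply: (@kill _ _ _ _ h hK a).
  - by apply/forallP => [[[]|[]]]; apply/forallP => [[[]|[]]].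
  - by [].
  - by case=> [[]|[]].
case: (eqVneq (f a) (f b)) => Hab.
  have Hcd : f c = f d.
    apply: (two_vals (j := f a)); first by rewrite eq_sym.
    by rewrite Hab eq_sym.
  pose h (x : bool + bool) := match x with inl u => inl (~~ u) | inr u => inr (~~ u) end.
  have hK : involutive h by case=> [[]|[]].
  apply: (@kill _ _ _ _ h hK a).
  - by apply/forallP => [[[]|[]]]; apply/forallP => [[[]|[]]].
  - by [].
  - by case=> [[]|[]]; rewrite /h /=.
have Had : f a = f d by apply: (two_vals (j := f b)) => //; rewrite eq_sym.
have Hbc : f b = f c.
  by apply: (two_vals (j := f a)) => //; rewrite eq_sym.
pose h (x : bool + bool) := match x with inl u => inr u | inr u => inl u end.
have hK : involutive h by case=> [[]|[]].
apply: (@kill _ _ _ _ h hK a).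
- by apply/forallP => [[[]|[]]]; apply/forallP => [[[]|[]]].
- by [].
- by case=> [[]|[]]; rewrite /h /=.
Qed.

Lemma mono (T : finType) (e : rel T) t t' :
  has_dist_labeling e t -> t <= t' -> has_dist_labeling e t'.
Proof.
move=> /existsP [f Hf] le; apply/existsP; exists [ffun x => widen_ord le (f x)].
apply/forallP => s; apply/implyP => /andP [Ha /forallP Hl].
move/forallP: Hf => /(_ s) /implyP; apply; rewrite Ha /=.
apply/forallP => x; have /eqP := Hl x; rewrite !ffunE => /(congr1 val) /= E.
by apply/eqP/val_inj.
Qed.

Theorem proposition2p1 :
  (forall (T : finType) (e : rel T) (g : T -> T),
      simple_graph e -> connected_graph e -> 2 <= #|T| ->
      1 <= Dist (functigraph e g) <= Dist e + 1)
  /\ (exists (T : finType) (e : rel T) (g : T -> T),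
      [/\ simple_graph e, connected_graph e, 2 <= #|T|
        & Dist (functigraph e g) = 1])
  /\ (exists (T : finType) (e : rel T) (g : T -> T),
      [/\ simple_graph e, connected_graph e, 2 <= #|T|
        & Dist (functigraph e g) = Dist e + 1]).
Proof.
split; first exact: part1.
split.
  exists (option bool : finType), eP, gP; split.
  - by split; [case=> [[]|]; case=> [[]|] | case=> [[]|]].
  - have c1 x : connect eP x (Some false).
      by case: x => [[]|]; [apply: connect1 | apply: connect0 | apply: connect1].
    have c2 y : connect eP (Some false) y.
      by case: y => [[]|]; [apply: connect1 | apply: connect0 | apply: connect1].
    move=> x y; exact: connect_trans (c1 x) (c2 y).
  - by rewrite card_option card_bool.
  - apply/eqP; rewrite eqn_leq (Dist_gt0 _ (inl None)) andbT; apply: Dist_le.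
    apply/existsP; exists [ffun=> (ord0 : 'I_1)]; apply/forallP => s.
    by apply/implyP => /andP [/asym -> _].
exists (bool : finType), eK2, id.
have sK : simple_graph eK2 by split; [case; case | case].
have cK : connected_graph eK2.
  move=> x y; case: (eqVneq x y) => [->|nxy]; [exact: connect0 | exact: connect1].
have cardK : 2 <= #|(bool : finType)| by rewrite card_bool.
split => //.
have h1 := part1 id sK cK cardK.
have h2 : Dist eK2 <= 2.
  apply: Dist_le; apply/existsP.
  exists [ffun x : bool => if x then (ord_max : 'I_2) else ord0].
  apply/forallP => s; apply/implyP => /andP [_ /forallP Hl].
  apply/eqP/permP => x; rewrite perm1; have := Hl x; rewrite !ffunE.
  by case: x; case: (s _).
have h3 : 2 < Dist (functigraph eK2 id).
  rewrite ltnNge; apply/negP => H.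
  by have := mono (Dist_has _) H; rewrite (negbTE noC4).
move: h1 h2 h3; set D := Dist _; set E := Dist _ => /andP [_ h1] h2 h3; lia.
Qed.
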